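(* In the free group $\mathbb{F}_2$ on $a,b$, set $a_0:=b^{-1}$, $b_0:=aba^{-1}$ and recursively $a_n:=a_{n-1}b_{n-1}$, $b_n:=a_{n-1}^{-1}b_{n-1}^{-1}$ for $n\ge1$. For $w\in\mathbb{F}_2$ let $\gamma(w):=\max\{m\mid w\in\gamma_m(\mathbb{F}_2)\}$. Then $\gamma(a_{n+2})\ge\gamma(a_{n+1})+\gamma(a_n)$ for all $n\in\mathbb{N}$. In particular, there exists a constant $C>0$ such that $\gamma(a_n)\ge C\cdot\varphi^n$ for all $n$, where $\varphi=\frac{1+\sqrt5}{2}$ is the golden ratio.
   Context: $\gamma_m(\mathbb{F}_2)$ denotes the $m$-th term of the lower central series: $\gamma_1(\mathbb{F}_2)=\mathbb{F}_2$, $\gamma_{m+1}(\mathbb{F}_2)=[\gamma_m(\mathbb{F}_2),\mathbb{F}_2]$. *)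

(* Defs.v *)
From mathcomp Require Import all_boot.
From Stdlib Require Import Reals.

Set Implicit Arguments.
Unset Strict Implicit.
Unset Printing Implicit Defensive.

(* A letter (g, e): g = false is a, g = true is b; e = true means inverse. *)
Definition letter := (bool * bool)%type.
Definition word := seq letter.

Definition flip (l : letter) : letter := (l.1, ~~ l.2).

Definition reduced (w : word) : bool := sorted (fun x y => y != flip x) w.

Definition push (l : letter) (w : word) : word :=
  match w with
  | y :: w' => if y == flip l then w' else l :: w
  | [::] => [:: l]
  end.

(* Group operations on reduced words: the elements of F_2. *)
Definition fone : word := [::].
Definition fmul (u v : word) : word := foldr push v u.
Definition finv (u : word) : word := rev (map flip u).
Definition fcomm (x y : word) : word :=
  fmul (finv x) (fmul (finv y) (fmul x y)).

Definition gen_a : word := [:: (false, false)].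
Definition gen_b : word := [:: (true, false)].

(** * Lower central series.
    [in_lcs m w] means w ∈ γ_m(F_2) (for m ≥ 1):
    γ_1 = F_2, and γ_{m+1} = the subgroup generated by the commutators
    [x, y] with x ∈ γ_m, y ∈ F_2. *)
Inductive in_lcs : nat -> word -> Prop :=
| lcs_base w : reduced w -> in_lcs 1 w
| lcs_comm m x y : in_lcs m x -> reduced y -> in_lcs m.+1 (fcomm x y)
| lcs_one m : in_lcs m.+1 fone
| lcs_mul m x y : in_lcs m.+1 x -> in_lcs m.+1 y -> in_lcs m.+1 (fmul x y)
| lcs_inv m x : in_lcs m.+1 x -> in_lcs m.+1 (finv x).

Fixpoint ab (n : nat) : word * word :=
  match n with
  | 0 => (finv gen_b, fmul gen_a (fmul gen_b (finv gen_a)))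
  | n'.+1 => let (x, y) := ab n' in (fmul x y, fmul (finv x) (finv y))
  end.

Definition a_seq (n : nat) : word := (ab n).1.
Definition b_seq (n : nat) : word := (ab n).2.

Definition phi : R := ((1 + sqrt 5) / 2)%R.

(* Main.v *)
Require Import Defs.
From mathcomp Require Import all_boot.
From Stdlib Require Import Reals Lra.
Require Import Defs.
Set Implicit Arguments. Unset Strict Implicit.

Lemma flipK : involutive flip. Proof. by case=> a b; rewrite /flip /= negbK. Qed.

Lemma flip_eq x y : (flip x == y) = (x == flip y).
Proof. by apply/eqP/eqP=> [<-|->]; rewrite flipK. Qed.

Lemma push_reduced l w : reduced w -> reduced (push l w).
Proof.
case: w => [|y w] //= H.
case: ifP => E; first by case: w H => //= z w /andP[].
by rewrite /= E H.
Qed.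

Lemma fmul_reduced u v : reduced v -> reduced (fmul u v).
Proof. by elim: u => //= l u IH H; apply: push_reduced; apply: IH. Qed.

Lemma finv_reduced u : reduced u -> reduced (finv u).
Proof.
rewrite /reduced /finv rev_sorted sorted_map.
case: u => //= x s; rewrite /relpre.
rewrite (@eq_path _ _ (fun x0 y : letter => y != flip x0)) // => a b /=.
by rewrite (flipK b) eq_sym.
Qed.

Lemma pushK l w : reduced w -> push l (push (flip l) w) = w.
Proof.
case: w => [|y w] /=; first by rewrite eqxx.
rewrite flipK; case: ifP => [/eqP -> | E].
  case: w => [|z w] //= /andP[H _]. by rewrite (negbTE H).
move=> _; rewrite /= eqxx //.
Qed.

Lemma fmul_push l v w : reduced w -> fmul (push l v) w = push l (fmul v w).
Proof.
move=> Hw; case: v => [|y v] //=; case: ifP => // /eqP ->.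
by rewrite pushK // fmul_reduced.
Qed.

Lemma fmulA u v w : reduced w -> fmul (fmul u v) w = fmul u (fmul v w).
Proof.
move=> Hw; elim: u => //= l u IH.
by rewrite fmul_push // IH.
Qed.

Lemma fmul1 u : fmul fone u = u. Proof. by []. Qed.

Lemma fmulr1 u : reduced u -> fmul u fone = u.
Proof.
elim: u => //= l u IH H.
have Hu : reduced u by case: u H {IH} => //= y u /andP[].
rewrite IH //; case: u H {IH Hu} => //= y u /andP[H _].
by rewrite (negbTE H).
Qed.

Lemma finv_cons l u : finv (l :: u) = finv u ++ [:: flip l].
Proof. by rewrite /finv /= rev_cons cats1. Qed.

Lemma fmulVu u : fmul (finv u) u = fone.
Proof.
elim: u => //= l u IH.
rewrite finv_cons /fmul foldr_cat /= flipK eqxx; exact: IH.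
Qed.

Lemma finvK u : finv (finv u) = u.
Proof. by rewrite /finv map_rev revK -map_comp (eq_map flipK) map_id. Qed.

Lemma fmuluV u : fmul u (finv u) = fone.
Proof. by rewrite -{1}(finvK u) fmulVu. Qed.

Lemma finvM u v : reduced u -> reduced v ->
  finv (fmul u v) = fmul (finv v) (finv u).
Proof.
move=> Hu Hv.
have Hg : reduced (fmul u v) by apply: fmul_reduced.
have Hh : reduced (fmul (finv v) (finv u)) by apply/fmul_reduced/finv_reduced.
have E : fmul (fmul (finv v) (finv u)) (fmul u v) = fone.
  by rewrite fmulA // -(fmulA (finv u)) // fmulVu fmul1 fmulVu.
by rewrite -[finv _]fmul1 -E fmulA ?finv_reduced // fmuluV fmulr1.
Qed.

Definition slet := (nat * bool)%type.
Definition sflip (p : slet) : slet := (p.1, ~~ p.2).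

Section Refl.
Variable env : nat -> word.
Hypothesis Henv : forall i, reduced (env i).

Definition lit (p : slet) : word := if p.2 then finv (env p.1) else env p.1.
Definition eval (l : seq slet) : word := foldr (fun p acc => fmul (lit p) acc) fone l.

Lemma lit_reduced p : reduced (lit p).
Proof. by rewrite /lit; case: ifP => _; rewrite ?finv_reduced. Qed.

Lemma lit_flip p : lit (sflip p) = finv (lit p).
Proof. by case: p => i [] //=; rewrite /lit /= finvK. Qed.

Lemma eval_reduced l : reduced (eval l).
Proof. by elim: l => //= p l IH; apply: fmul_reduced. Qed.

Lemma eval_cat l1 l2 : eval (l1 ++ l2) = fmul (eval l1) (eval l2).
Proof.
elim: l1 => //= p l IH; rewrite IH fmulA //; exact: eval_reduced.
Qed.

Definition sinv (l : seq slet) := rev (map sflip l).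

Lemma eval_sinv l : eval (sinv l) = finv (eval l).
Proof.
elim: l => //= p l IH.
rewrite /sinv /= rev_cons -cats1 eval_cat -/(sinv l) IH /= lit_flip.
rewrite finvM ?lit_reduced ?eval_reduced //.
by rewrite fmulr1 // finv_reduced ?lit_reduced.
Qed.

Inductive tm := V of nat | I of tm | M of tm & tm | O.

Fixpoint interp (t : tm) : word :=
  match t with
  | V i => env i | I t => finv (interp t) | M t1 t2 => fmul (interp t1) (interp t2)
  | O => fone end.

Fixpoint flat (t : tm) : seq slet :=
  match t with
  | V i => [:: (i, false)] | I t => sinv (flat t) | M t1 t2 => flat t1 ++ flat t2
  | O => [::] end.

Lemma interp_flat t : interp t = eval (flat t).
Proof.
elim: t => [i|t IH|t1 IH1 t2 IH2|] //=.
- by rewrite fmulr1 // Henv.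
- by rewrite eval_sinv IH.
- by rewrite eval_cat IH1 IH2.
Qed.

Definition spush (p : slet) (l : seq slet) :=
  match l with
  | q :: l' => if q == sflip p then l' else p :: l
  | [::] => [:: p] end.

Definition nred (l : seq slet) := foldr spush [::] l.

Lemma eval_spush p l : eval (spush p l) = eval (p :: l).
Proof.
case: l => //= q l; case: ifP => // /eqP ->.
rewrite lit_flip -fmulA ?eval_reduced // fmuluV //.
Qed.

Lemma eval_nred l : eval (nred l) = eval l.
Proof. by elim: l => //= p l IH; rewrite eval_spush /= IH. Qed.

Lemma solve t1 t2 : nred (flat t1) = nred (flat t2) -> interp t1 = interp t2.
Proof. by move=> E; rewrite !interp_flat -eval_nred E eval_nred. Qed.
End Refl.

Definition tcomm a b := M (I a) (M (I b) (M a b)).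
Definition tconj g w := M (I g) (M w g).
Definition conj g w := fmul (finv g) (fmul w g).

Lemma env_red (s : seq word) : all reduced s -> forall i, reduced (nth fone s i).
Proof.
move=> H i; case: (ltnP i (size s)) => Hi.
  by apply: (allP H); apply: mem_nth.
by rewrite nth_default.
Qed.

Lemma hall x y z : all reduced [:: x; y; z] ->
  fcomm x (fcomm y z) =
  conj z (fmul (conj x (fcomm (fcomm (finv z) (finv x)) y))
               (conj y (fcomm (fcomm x (finv y)) (finv z)))).
Proof.
move=> H.
have := (@solve (nth fone [:: x; y; z]) (@env_red _ H)
  (tcomm (V 0) (tcomm (V 1) (V 2)))
  (tconj (V 2) (M (tconj (V 0) (tcomm (tcomm (I (V 2)) (I (V 0))) (V 1)))
                 (tconj (V 1) (tcomm (tcomm (V 0) (I (V 1))) (I (V 2)))))) ).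
move=> E; apply: E.
by vm_compute.
Qed.

Ltac grp s t1 t2 H :=
  let E := fresh "E" in have E := (@solve (nth fone s) (@env_red _ H) t1 t2); apply: E; by vm_compute.

Lemma id_conj w g : all reduced [:: w; g] -> conj g w = fmul w (fcomm w g).
Proof. move=> H; grp [:: w; g] (tconj (V 1) (V 0)) (M (V 0) (tcomm (V 0) (V 1))) H. Qed.

Lemma id_mul x u v : all reduced [:: x; u; v] ->
  fcomm x (fmul u v) = fmul (fcomm x v) (conj v (fcomm x u)).
Proof. move=> H; grp [:: x; u; v] (tcomm (V 0) (M (V 1) (V 2)))
  (M (tcomm (V 0) (V 2)) (tconj (V 2) (tcomm (V 0) (V 1)))) H. Qed.

Lemma id_inv x u : all reduced [:: x; u] ->
  fcomm x (finv u) = finv (conj (finv u) (fcomm x u)).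
Proof. move=> H; grp [:: x; u] (tcomm (V 0) (I (V 1)))
  (I (tconj (I (V 1)) (tcomm (V 0) (V 1)))) H. Qed.

Lemma id_swap a b : all reduced [:: a; b] -> fcomm a b = finv (fcomm b a).
Proof. move=> H; grp [:: a; b] (tcomm (V 0) (V 1)) (I (tcomm (V 1) (V 0))) H. Qed.

Lemma id_one x : all reduced [:: x] -> fcomm x fone = fone.
Proof. move=> H; grp [:: x] (tcomm (V 0) O) O H. Qed.

Lemma id_ab x y : all reduced [:: x; y] ->
  fmul (fmul x y) (fmul (finv x) (finv y)) = fcomm (finv (fmul x y)) x.
Proof. move=> H; grp [:: x; y] (M (M (V 0) (V 1)) (M (I (V 0)) (I (V 1))))
  (tcomm (I (M (V 0) (V 1))) (V 0)) H. Qed.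

Lemma fcomm_reduced x y : reduced y -> reduced (fcomm x y).
Proof. by move=> H; rewrite /fcomm !fmul_reduced. Qed.

Lemma lcs_reduced m w : in_lcs m w -> reduced w.
Proof.
elim=> // {m w}.
- by move=> m x y _ _ Hy; apply: fcomm_reduced.
- by move=> m x y _ _ _ Hy; apply: fmul_reduced.
- by move=> m x _ Hx; apply: finv_reduced.
Qed.

Lemma lcs_pos m w : in_lcs m w -> 0 < m.
Proof. by case. Qed.

Lemma lcs_down k w : in_lcs k w -> forall j, 0 < j <= k -> in_lcs j w.
Proof.
elim=> {k w}.
- move=> w Hw j /andP[H1 H2]. have -> : j = 1 by apply/eqP; rewrite eqn_leq H1 H2.
  exact: lcs_base.
- move=> m x y Hx IH Hy [//|[|j]] /andP[_ Hj].
    apply: lcs_base; apply: fcomm_reduced Hy.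
  by apply: lcs_comm => //; apply: IH.
- by move=> m [//|j] _; apply: lcs_one.
- by move=> m x y _ IH1 _ IH2 [//|j] Hj; apply: lcs_mul; [apply: IH1|apply: IH2].
- by move=> m x _ IH [//|j] Hj; apply: lcs_inv; apply: IH.
Qed.

Lemma lcs_conj k w g : in_lcs k w -> reduced g -> in_lcs k (conj g w).
Proof.
move=> Hw Hg; have Hr := lcs_reduced Hw.
rewrite id_conj /= ?Hr ?Hg //.
case: k Hw => [|k] Hw; first by have := lcs_pos Hw.
apply: lcs_mul => //; apply: (@lcs_down k.+2); first exact: lcs_comm.
by rewrite /= ltnW.
Qed.

Lemma lcs_inv' k w : in_lcs k w -> in_lcs k (finv w).
Proof.
case: k => [|k] Hw; first by have := lcs_pos Hw.
exact: lcs_inv.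
Qed.

Theorem lcs_commS j u : in_lcs j u -> forall i x, in_lcs i x -> in_lcs (i + j) (fcomm x u).
Proof.
elim=> {j u}.
- by move=> u Hu i x Hx; rewrite addn1; apply: lcs_comm.
- move=> m y z Hy IH Hz i x Hx.
  have Rx := lcs_reduced Hx; have Ry := lcs_reduced Hy.
  have Ri : 0 < i := lcs_pos Hx.
  rewrite hall /= ?Rx ?Ry ?Hz // addnS.
  apply: lcs_conj; last exact: Hz.
  apply: lcs_mul.
    apply: lcs_conj => //.
    have H1 : in_lcs i.+1 (fcomm (finv z) (finv x)).
      rewrite id_swap /= ?finv_reduced //.
      apply: lcs_inv; apply: lcs_comm; first exact: lcs_inv'.
      exact: finv_reduced.
    by have := IH _ _ H1; rewrite addSn.
  apply: lcs_conj => //.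
  apply: lcs_comm; last exact: finv_reduced.
  rewrite id_inv /= ?Rx ?Ry //.
  apply: lcs_inv'; apply: lcs_conj; last exact: finv_reduced.
  exact: IH.
- move=> m i x Hx; rewrite id_one /= ?(lcs_reduced Hx) // addnS; exact: lcs_one.
- move=> m u v Hu IHu Hv IHv i x Hx.
  rewrite id_mul /= ?(lcs_reduced Hx) ?(lcs_reduced Hu) ?(lcs_reduced Hv) //.
  have := IHu _ _ Hx; have := IHv _ _ Hx; rewrite addnS => H2 H1.
  apply: lcs_mul => //; apply: lcs_conj => //; exact: lcs_reduced Hv.
- move=> m u Hu IH i x Hx.
  rewrite id_inv /= ?(lcs_reduced Hx) ?(lcs_reduced Hu) //.
  apply: lcs_inv'; apply: lcs_conj; last by apply: finv_reduced; exact: lcs_reduced Hu.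
  exact: IH.
Qed.

Lemma ab_succ n : ab n.+1 =
  (fmul (a_seq n) (b_seq n), fmul (finv (a_seq n)) (finv (b_seq n))).
Proof. by rewrite /a_seq /b_seq /=; case: (ab n). Qed.

Lemma ab_reduced n : reduced (a_seq n) && reduced (b_seq n).
Proof.
elim: n => [|n /andP[Ha Hb]]; first by [].
by rewrite /a_seq /b_seq ab_succ /= !fmul_reduced // finv_reduced.
Qed.

Lemma a_seqSS n : a_seq n.+2 = fcomm (finv (a_seq n.+1)) (a_seq n).
Proof.
have /andP[Ha Hb] := ab_reduced n.
rewrite {1}/a_seq ab_succ /= /b_seq ab_succ /=.
have -> : a_seq n.+1 = fmul (a_seq n) (b_seq n) by rewrite /a_seq ab_succ.
by rewrite id_ab /= ?Ha ?Hb.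
Qed.

Lemma part1 n m1 m2 : in_lcs m1 (a_seq n.+1) -> in_lcs m2 (a_seq n) ->
      in_lcs (m1 + m2) (a_seq n.+2).
Proof.
move=> H1 H2; rewrite a_seqSS; apply: lcs_commS H2 _ _ _.
exact: lcs_inv'.
Qed.

Fixpoint gfib (n : nat) : nat :=
  match n with 0 => 1 | 1 => 2 | (n'.+1 as n1).+1 => gfib n1 + gfib n' end.

Lemma a_gfib n : in_lcs (gfib n) (a_seq n) /\ in_lcs (gfib n.+1) (a_seq n.+1).
Proof.
elim: n => [|n [IH1 IH2]].
  split; first by apply: lcs_base.
  have -> : a_seq 1 = fcomm gen_b (finv gen_a) by vm_compute.
  by apply: lcs_comm; [apply: lcs_base|].
split=> //; exact: part1.
Qed.

Open Scope R_scope.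

Lemma phi_sq : phi ^ 2 = phi + 1.
Proof.
have H := sqrt_sqrt 5 ltac:(lra).
rewrite /phi; simpl; nra.
Qed.

Lemma phi_le n : phi ^ n <= INR (gfib n) /\ phi ^ n.+1 <= INR (gfib n.+1).
Proof.
have H5 := sqrt_sqrt 5 ltac:(lra).
have H0 := sqrt_pos 5.
elim: n => [|n [IH1 IH2]].
  rewrite /phi /=; split; first lra.
  nra.
split=> //.
have -> : (gfib n.+2) = (gfib n.+1 + gfib n)%nat by [].
rewrite plus_INR.
have -> : phi ^ n.+2 = phi ^ n.+1 + phi ^ n.
  have -> : phi ^ n.+2 = phi ^ n * phi ^ 2 by rewrite -pow_add Nat.add_comm.
  by rewrite phi_sq /=; ring.
lra.
Qed.

Close Scope R_scope.
Theorem lemma2p5 :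
  (forall n m1 m2 : nat,
      in_lcs m1 (a_seq n.+1) -> in_lcs m2 (a_seq n) ->
      in_lcs (m1 + m2) (a_seq n.+2))
  /\
  (exists C : R, (0 < C)%R /\
     forall n m : nat, (1 <= m)%N -> (INR m <= C * phi ^ n)%R ->
       in_lcs m (a_seq n)).
Proof.
split; first exact: part1.
exists 1%R; split; first lra.
move=> n m Hm Hle.
have [H1 _] := phi_le n.
have Hg : (m <= gfib n)%N.
  apply/leP; apply: INR_le; lra.
have [Ha _] := a_gfib n.
apply: (lcs_down Ha); by rewrite Hm Hg.
Qed.
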